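(* Let $q>2$, let $r\in\mathbb{R}$, and let $a_1,\dots,a_n>0$, $b_1,\dots,b_n>0$. Then $$\left(\sum_{i=1}^n b_i^r\right)^{1-q}\sum_{i=1}^n a_i^r \ln_q\!\left(\frac{a_i^r}{b_i^r}\right)\ \leq\ \left(\sum_{i=1}^n a_i^r\right)\left\{\ln_q\!\left(\sum_{i=1}^n a_i^r\right)-\ln_q\!\left(\sum_{i=1}^n b_i^r\right)\right\}.$$
   Context: For $q\neq 1$ and $x>0$, the $q$-deformed logarithm is $\ln_q(x)=\dfrac{x^{1-q}-1}{1-q}$. *)

(* Defs.v *)
From Stdlib Require Import Reals.
Open Scope R_scope.

Definition lnq (q x : R) : R := (Rpower x (1 - q) - 1) / (1 - q).

(* sum_{i=1}^n f_i, indices shifted to 0..n-1 *)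
Definition sumn (n : nat) (f : nat -> R) : R :=
  match n with O => 0 | S m => sum_f_R0 f m end.

(* Main.v *)
Require Import Defs.
From Stdlib Require Import Reals Lra Psatz.
Open Scope R_scope.

Lemma bern (s z : R) : s < 0 -> 1 + s * (exp z - 1) <= exp (s * z).
Proof.
  intros hs. pose proof (exp_ineq1_le (s*z)). pose proof (exp_ineq1_le z). nra.
Qed.

Lemma tang (s lu lm : R) : s < 0 ->
  exp (s*lm) + s * exp (s*lm) / exp lm * (exp lu - exp lm) <= exp (s*lu).
Proof.
  intros hs. pose proof (bern s (lu - lm) hs) as H.
  assert (e1 : exp (s*lu) = exp (s*(lu-lm)) * exp (s*lm)).
  { rewrite <- exp_plus. f_equal. ring. }
  assert (e2 : exp (lu - lm) = exp lu / exp lm).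
  { unfold Rminus. rewrite exp_plus, exp_Ropp. reflexivity. }
  rewrite e2 in H. rewrite e1.
  pose proof (exp_pos (s*lm)). pose proof (exp_pos lm).
  apply Rmult_le_compat_r with (r := exp (s*lm)) in H; [|lra].
  eapply Rle_trans; [|exact H]. right. field. lra.
Qed.

Lemma term (q x y X Y : R) : 2 < q -> 0 < x -> 0 < y -> 0 < X -> 0 < Y ->
  x * lnq q (x / y) <=
  (y * exp ((2-q) * ln (X/Y)) + (2-q) * exp ((2-q) * ln (X/Y)) / (X/Y) * (x - (X/Y)*y) - x) / (1 - q).
Proof.
  intros hq hx hy hX hY. unfold lnq, Rpower.
  set (lu := ln (x/y)). set (lm := ln (X/Y)).
  assert (eu : exp lu = x / y) by (apply exp_ln; apply Rdiv_lt_0_compat; lra).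
  assert (em : exp lm = X / Y) by (apply exp_ln; apply Rdiv_lt_0_compat; lra).
  pose proof (tang (2-q) lu lm ltac:(lra)) as T.
  rewrite eu, em in T.
  assert (xE : x * exp ((1-q)*lu) = y * exp ((2-q)*lu)).
  { replace ((2-q)*lu) with (lu + (1-q)*lu) by ring. rewrite exp_plus, eu. field. lra. }
  assert (Hge : y * (exp ((2 - q) * lm) + (2 - q) * exp ((2 - q) * lm) / (X / Y) * (x / y - X / Y))
               <= x * exp ((1-q)*lu)).
  { rewrite xE. apply Rmult_le_compat_l; lra. }
  replace (y * (exp ((2 - q) * lm) + (2 - q) * exp ((2 - q) * lm) / (X / Y) * (x / y - X / Y)))
    with (y * exp ((2 - q) * lm) + (2 - q) * exp ((2 - q) * lm) / (X / Y) * (x - X / Y * y)) in Hge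
    by (field; lra).
  set (B := y * exp ((2 - q) * lm) + (2 - q) * exp ((2 - q) * lm) / (X / Y) * (x - X / Y * y)) in *.
  set (E := exp ((1-q)*lu)) in *.
  unfold Rdiv. set (ip := / (1-q)).
  assert (ip < 0) by (apply Rinv_lt_0_compat; lra).
  nra.
Qed.

Lemma sum_lin (x y : nat -> R) (M K m p : R) (k : nat) :
  sum_f_R0 (fun i => (y i * M + K * (x i - m * y i) - x i) / p) k =
  (sum_f_R0 y k * M + K * (sum_f_R0 x k - m * sum_f_R0 y k) - sum_f_R0 x k) / p.
Proof.
  induction k; simpl. reflexivity. rewrite IHk. unfold Rdiv. ring.
Qed.

Lemma sum_pos (f : nat -> R) (m : nat) : (forall i, (i <= m)%nat -> 0 < f i) -> 0 < sum_f_R0 f m.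
Proof.
  induction m; intros H; simpl. apply H; lia.
  pose proof (IHm (fun i hi => H i ltac:(lia))). pose proof (H (S m) ltac:(lia)). lra.
Qed.

Theorem mainTheorem4 (q r : R) (n : nat) (a b : nat -> R)
  (hq : 2 < q) (hn : (1 <= n)%nat)
  (ha : forall i, (i < n)%nat -> 0 < a i)
  (hb : forall i, (i < n)%nat -> 0 < b i) :
  Rpower (sumn n (fun i => Rpower (b i) r)) (1 - q)
    * sumn n (fun i => Rpower (a i) r * lnq q (Rpower (a i) r / Rpower (b i) r))
  <= sumn n (fun i => Rpower (a i) r)
     * (lnq q (sumn n (fun i => Rpower (a i) r)) - lnq q (sumn n (fun i => Rpower (b i) r))).
Proof.
  destruct n as [|m]; [lia|]. unfold sumn.
  set (x := fun i => Rpower (a i) r). set (y := fun i => Rpower (b i) r).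
  assert (hx : forall i, (i <= m)%nat -> 0 < x i).
  { intros i hi. unfold x, Rpower. apply exp_pos. }
  assert (hy : forall i, (i <= m)%nat -> 0 < y i).
  { intros i hi. unfold y, Rpower. apply exp_pos. }
  change (fun i => Rpower (a i) r * lnq q (Rpower (a i) r / Rpower (b i) r))
    with (fun i => x i * lnq q (x i / y i)).
  fold x y.
  set (X := sum_f_R0 x m). set (Y := sum_f_R0 y m).
  assert (hX : 0 < X) by (apply sum_pos; exact hx).
  assert (hY : 0 < Y) by (apply sum_pos; exact hy).
  set (M := exp ((2-q) * ln (X/Y))).
  set (K := (2-q) * M / (X/Y)).
  assert (S1 : sum_f_R0 (fun i => x i * lnq q (x i / y i)) m <=
               sum_f_R0 (fun i => (y i * M + K * (x i - (X/Y) * y i) - x i) / (1-q)) m).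
  { apply sum_Rle. intros i hi. apply term; auto. }
  rewrite sum_lin in S1. fold X Y in S1.
  replace (X - X / Y * Y) with 0 in S1 by (field; lra).
  assert (hc : 0 < Rpower Y (1-q)) by (unfold Rpower; apply exp_pos).
  eapply Rle_trans. apply Rmult_le_compat_l. lra. exact S1.
  unfold lnq, M, Rpower.
  assert (ld : ln (X/Y) = ln X - ln Y) by (unfold Rdiv; rewrite ln_mult, ln_Rinv by (try apply Rinv_0_lt_compat; lra); ring). rewrite ld.
  assert (eY : Y = exp (ln Y)) by (rewrite exp_ln; lra).
  assert (eX : X = exp (ln X)) by (rewrite exp_ln; lra).
  assert (k1 : exp ((1-q)*ln Y) * (Y * exp ((2-q)*(ln X - ln Y))) = X * exp ((1-q)*ln X)).
  { rewrite eY at 2. rewrite eX at 2. rewrite <- !exp_plus. f_equal. ring. }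
  right. unfold Rdiv.
  replace (exp ((1 - q) * ln Y) * ((Y * exp ((2 - q) * (ln X - ln Y)) + K * 0 - X) * / (1 - q)))
    with ((exp ((1 - q) * ln Y) * (Y * exp ((2 - q) * (ln X - ln Y))) - exp ((1 - q) * ln Y) * X) * / (1 - q)) by ring.
  rewrite k1. field. lra.
Qed.
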